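(* Let $\mathbf{H}$ be the gap-insertion Hopf algebra of noncrossing partitions, $\mathbf{B}$ the block-substitution bialgebra of noncrossing partitions, and $\psi_\prec$ the unique element of $\mathbf{H}^*$ with $\psi_\prec=\varepsilon+e\prec\psi_\prec$. Let $\kappa$ be an infinitesimal character of $\mathbf{H}$ and $K$ the character of $\mathbf{B}$ with $K(P)=\kappa(P)$ for every nonempty noncrossing partition $P$. Then for every character $\phi$ of $\mathbf{H}$, $$\phi=\varepsilon+\kappa\prec\phi\iff\phi=\psi_\prec\curvearrowleft K.$$ In other words, the unique solution $\mathcal{E}_\prec(\kappa)$ of $\phi=\varepsilon+\kappa\prec\phi$ equals $\psi_\prec\curvearrowleft K$.
   Context: Noncrossing partitions of $[n]$: no $a<c<b<d$ with $a,b$ in one block and $c,d$ in another; partitions of finite linearly ordered sets are identified with partitions of $[n]$ via the order-preserving bijection; $P_{|X}$ is the induced partition. $\operatorname{Conv}(X)=\{\min X,\dots,\max X\}$; on blocks $\pi\to\rho$ iff $\operatorname{Conv}(\pi)\cap\rho\ne\emptyset$ (transitively closed). Upperset $U$: ($\pi\in U,\pi\to\rho$)$\Rightarrow\rho\in U$; lowerset $L$: ($\pi\in L,\sigma\to\pi$)$\Rightarrow\sigma\in L$. A cut $(L,U)$ splits the blocks into a lowerset $L$ and its complement $U$; $L$ is identified with the restriction of $P$ to the union of its blocks, elements $x_1<\dots<x_k$; $D_0=\{y<x_1\}$, $D_i=\{x_i<y<x_{i+1}\}$, $D_k=\{y>x_k\}$, $U_i=P_{|D_i}$, $\overline U$ =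 ordered product of nonempty $U_i$. $\mathbf{H}$: free associative unital algebra on nonempty noncrossing partitions; basis of multipartitions $P_1\cdots P_r$ viewed as partitions of $[n_1+\dots+n_r]$ by shifting; cuts of multipartitions are tuples of cuts, $L=L_1\cdots L_r$, $\overline U=\overline{U_1}\cdots\overline{U_r}$. Counit $\varepsilon$ ($1$ on $\mathbf 1$, $0$ on nonempty monomials). For nonempty $P$, $\Delta_\prec(P)=\sum_{\text{cuts},1\in L}L\otimes\overline U$. For $f,g\in\mathbf H^*$, $(f\prec g)(\mathbf 1)=0$ and $(f\prec g)(x)=(f\otimes g)\Delta_\prec(x)$ on nonempty multipartitions. Characters: unital algebra maps to $\mathbb K$; infinitesimal characters: linear forms vanishing on $\mathbf 1$ and on products of two nonempty monomials. $e$ is the infinitesimal character of $\mathbf H$ with $e(P)=1$ if $P$ is a noncrossing partition with one block and $e(P)=0$ for other noncrossing partitions. $\mathbf{B}$: free commutative unital algebra on nonempty noncrossing partitions; for noncrossing $P\leq Q$ (refinement), $Q=\{\tau_1,\dots,\tau_l\}$, $P/Q=P_{|\tau_1}\cdots P_{|\tau_l}$. Coaction $\rho:\mathbf H\to\mathbf H\otimes\mathbf B$, the algebra morphism with $\rho(P)=\sum_{Q\geq P\text{ noncrossing}}Q\otimes P/Q$; for $\alpha\in\mathbf H^*$ and a character $\phi$ of $\mathbf B$, $\alpha\curvearrowleft\phi=(\alpha\otimes\phi)\circ\rho$. *)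

(* Defs.v *)
From mathcomp Require Import all_boot all_order all_algebra.
Set Implicit Arguments. Unset Strict Implicit. Unset Printing Implicit Defensive.
Import GRing.Theory.

Definition noncrossing {n : nat} (P : {set {set 'I_n}}) : bool :=
  [forall pi in P, forall rho in P, (pi != rho) ==>
     ~~ [exists a : 'I_n, exists b : 'I_n, exists c : 'I_n, exists d : 'I_n,
          [&& a \in pi, b \in pi, c \in rho, d \in rho,
              (a < c)%N, (c < b)%N & (b < d)%N]]].

Definition ncpart {n : nat} (P : {set {set 'I_n}}) : bool :=
  partition P [set: 'I_n] && noncrossing P.

Definition Conv {n : nat} (X : {set 'I_n}) : {set 'I_n} :=
  [set x : 'I_n | [exists a in X, exists b in X, (a <= x)%N && (x <= b)%N]].

Definition arrow0 {n : nat} (P : {set {set 'I_n}}) : rel {set 'I_n} :=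
  fun pi rho => [&& pi \in P, rho \in P & Conv pi :&: rho != set0].
(* its transitive closure (the base relation is reflexive on blocks) *)
Definition arrow {n : nat} (P : {set {set 'I_n}}) : rel {set 'I_n} :=
  connect (arrow0 P).

Definition lowerset {n : nat} (P L : {set {set 'I_n}}) : bool :=
  (L \subset P) &&
  [forall pi in L, forall sigma in P, arrow P sigma pi ==> (sigma \in L)].

Definition stdpos {n : nat} (X : {set 'I_n}) (x : 'I_n) : nat :=
  #|[set y in X | (y < x)%N]|.

(* induced partition P_{|X}, transported to 'I_#|X| *)
Definition restr {n : nat} (P : {set {set 'I_n}}) (X : {set 'I_n})
  : {set {set 'I_#|X| }} :=
  [set [set i : 'I_#|X| | [exists x in pi :&: X, stdpos X x == i]]
    | pi in P & pi :&: X != set0].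

Definition Raw := {m : nat & {set {set 'I_m}}}.
Definition isNCP (p : Raw) : bool := (0 < tag p)%N && ncpart (tagged p).
Definition NCP := {p : Raw | isNCP p}.
Definition ncp_n (p : NCP) : nat := tag (val p).
Definition ncp_P (p : NCP) : {set {set 'I_(ncp_n p)}} := tagged (val p).

(* packs a partition as a nonempty NC partition; None if empty
   (or not noncrossing, which never happens below) *)
Definition toNCP {m : nat} (P : {set {set 'I_m}}) : option NCP :=
  insub (Tagged (fun k => {set {set 'I_k}}) P).
Definition seq_of_opt (o : option NCP) : seq NCP :=
  if o is Some q then [:: q] else [::].

(* Monomials of H (words of nonempty NC partitions) are  seq NCP;
   an element of H^* is a function  seq NCP -> K  (its values on the basis). *)

Definition unionL {n : nat} (L : {set {set 'I_n}}) : {set 'I_n} :=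
  \bigcup_(pi in L) pi.
(* gap D_i of X (i = 0..#|X|) *)
Definition gap {n : nat} (X : {set 'I_n}) (i : nat) : {set 'I_n} :=
  [set y : 'I_n | (y \notin X) && (stdpos X y == i)].

Definition cut_L {n : nat} (P L : {set {set 'I_n}}) : seq NCP :=
  seq_of_opt (toNCP (restr P (unionL L))).
Definition cut_Ubar {n : nat} (P L : {set {set 'I_n}}) : seq NCP :=
  pmap (fun i => toNCP (restr P (gap (unionL L) i))) (iota 0 (#|unionL L|).+1).

Definition cuts (p : NCP) : seq (seq NCP * seq NCP) :=
  [seq (cut_L (ncp_P p) L, cut_Ubar (ncp_P p) L)
    | L <- enum [set L : {set {set 'I_(ncp_n p)}} | lowerset (ncp_P p) L]].
Definition cuts1 (p : NCP) : seq (seq NCP * seq NCP) :=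
  [seq (cut_L (ncp_P p) L, cut_Ubar (ncp_P p) L)
    | L <- enum [set L : {set {set 'I_(ncp_n p)}} | lowerset (ncp_P p) L &&
               [exists pi in L, exists x in pi, nat_of_ord x == 0%N]]].

Fixpoint allcuts (w : seq NCP) : seq (seq NCP * seq NCP) :=
  match w with
  | [::] => [:: ([::], [::])]
  | p :: w' => [seq (c.1 ++ d.1, c.2 ++ d.2) | c <- cuts p, d <- allcuts w']
  end.

Section Dual.
Variable R : fieldType.
Local Open Scope ring_scope.

Definition eps (w : seq NCP) : R := if w is [::] then 1 else 0.

Definition einf (w : seq NCP) : R :=
  match w with [:: p] => (#|ncp_P p| == 1%N)%:R | _ => 0 end.

(* (f < g)(1) = 0, (f < g)(x) = (f (x) g) Delta_<(x) *)
Definition halfprec (f g : seq NCP -> R) (w : seq NCP) : R :=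
  match w with
  | [::] => 0
  | p :: w' => \sum_(c <- cuts1 p) \sum_(d <- allcuts w')
                  f (c.1 ++ d.1) * g (c.2 ++ d.2)
  end.

Definition is_char (f : seq NCP -> R) : Prop :=
  f [::] = 1 /\ forall u v, f (u ++ v) = f u * f v.

Definition is_infchar (f : seq NCP -> R) : Prop :=
  f [::] = 0 /\ forall u v, (0 < size u)%N -> (0 < size v)%N -> f (u ++ v) = 0.

Definition refines {n : nat} (P Q : {set {set 'I_n}}) : bool :=
  [forall pi in P, exists tau in Q, pi \subset tau].

(* P/Q as a monomial of B (a commutative monomial, listed in some order) *)
Definition quotNC {n : nat} (P Q : {set {set 'I_n}}) : seq NCP :=
  pmap (fun tau => toNCP (restr P tau)) (enum Q).

Definition coarsen (p : NCP) : seq (NCP * seq NCP) :=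
  pmap (fun Q => omap (fun q => (q, quotNC (ncp_P p) Q)) (toNCP Q))
    (enum [set Q : {set {set 'I_(ncp_n p)}} | ncpart Q && refines (ncp_P p) Q]).

Fixpoint allcoarse (w : seq NCP) : seq (seq NCP * seq NCP) :=
  match w with
  | [::] => [:: ([::], [::])]
  | p :: w' => [seq (c.1 :: d.1, c.2 ++ d.2) | c <- coarsen p, d <- allcoarse w']
  end.

(* alpha <~ Phi = (alpha (x) Phi) o rho, Phi a character of B given on monomials *)
Definition coact (alpha Phi : seq NCP -> R) (w : seq NCP) : R :=
  \sum_(c <- allcoarse w) alpha c.1 * Phi c.2.

Definition charB (kappa : seq NCP -> R) (m : seq NCP) : R :=
  \prod_(q <- m) kappa [:: q].

End Dual.

(* Main.v *)
Require Import Defs.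
From mathcomp Require Import all_boot all_order all_algebra.
Set Implicit Arguments. Unset Strict Implicit. Unset Printing Implicit Defensive.
Set Warnings "-notation-overridden,-ambiguous-paths".
Import GRing.Theory.
Section Std.
Variable n : nat.
Implicit Types (X Y : {set 'I_n}) (x y z : 'I_n).

Lemma card_ltset N k : k <= N -> #|[set j : 'I_N | j < k]| = k.
Proof.
move=> kN.
have -> : [set j : 'I_N | j < k] = widen_ord kN @: [set: 'I_k].
  apply/setP => j; rewrite !inE; apply/idP/imsetP => [jk|[j' _ ->]]; last exact: ltn_ord j'.
  by exists (Ordinal jk) => //; apply: val_inj.
rewrite card_imset ?cardsT ?card_ord //.
by move=> a b /(congr1 val) /= ab; apply: val_inj.
Qed.

Lemma stdpos_le X x : stdpos X x <= #|X|.
Proof. by apply: subset_leq_card; apply/subsetP => y; rewrite inE => /andP[]. Qed.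

Lemma stdpos_lt X x : x \in X -> stdpos X x < #|X|.
Proof.
move=> xX; apply: proper_card; apply/properP; split.
  by apply/subsetP => y; rewrite inE => /andP[].
by exists x => //; rewrite inE ltnn andbF.
Qed.

Lemma stdpos_mono X x y : x <= y -> stdpos X x <= stdpos X y.
Proof.
move=> xy; apply: subset_leq_card; apply/subsetP => z; rewrite !inE => /andP[-> /=].
by move=> zx; apply: leq_trans zx xy.
Qed.

Lemma stdpos_strict X x y : x \in X -> x < y -> stdpos X x < stdpos X y.
Proof.
move=> xX xy; apply: proper_card; apply/properP; split.
  apply/subsetP => z; rewrite !inE => /andP[-> /=] zx; exact: ltn_trans zx xy.
by exists x; rewrite !inE ?xX ?xy // ltnn andbF.
Qed.

Lemma stdpos_ltE X x y : x \in X -> y \in X -> (stdpos X x < stdpos X y) = (x < y).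
Proof.
move=> xX yX; apply/idP/idP; last exact: stdpos_strict.
move=> h; rewrite ltnNge; apply/negP => yx.
by move: (stdpos_mono X yx); rewrite leqNgt h.
Qed.

Lemma stdpos_inj X x y : x \in X -> y \in X -> stdpos X x = stdpos X y -> x = y.
Proof.
move=> xX yX e; apply: val_inj => /=.
case: (ltngtP x y) => // h.
  by move: h; rewrite -(stdpos_ltE xX yX) e ltnn.
by move: h; rewrite -(stdpos_ltE yX xX) e ltnn.
Qed.

Lemma stdpos_between X y z : y < z -> stdpos X y < stdpos X z ->
  exists2 x, x \in X & (y <= x) && (x < z).
Proof.
move=> yz lt.
have: ~~ ([set w in X | w < z] \subset [set w in X | w < y]).
  by apply/negP => /subset_leq_card; rewrite leqNgt lt.
case/subsetPn => x; rewrite !inE => /andP[xX xz] /nandP[/negP//|xy].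
by exists x => //; rewrite xz leqNgt xy.
Qed.

Lemma stdpos_onto X i : i < #|X| -> exists2 x, x \in X & stdpos X x = i.
Proof.
move=> iX.
have Xn : #|X| <= n by have := max_card (mem X); rewrite card_ord.
pose f x : 'I_n.+1 := inord (stdpos X x).
have fE x : nat_of_ord (f x) = stdpos X x.
  by rewrite /f inordK // ltnS (leq_trans (stdpos_le X x)).
have injf : {in X &, injective f}.
  by move=> a b aX bX /(congr1 (@nat_of_ord _)); rewrite !fE; apply: stdpos_inj.
have sub : f @: X \subset [set j : 'I_n.+1 | j < #|X|].
  by apply/subsetP => j /imsetP[x xX ->]; rewrite inE fE stdpos_lt.
have : f @: X = [set j : 'I_n.+1 | j < #|X|].
  by apply/eqP; rewrite eqEcard sub /= card_in_imset // card_ltset // leqW.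
move/setP/(_ (inord i)); rewrite inE inordK ?iX; last by rewrite ltnS (leq_trans _ Xn) // ltnW.
case/imsetP => x xX /(congr1 (@nat_of_ord _)); rewrite fE inordK => [e|]; first by exists x.
by rewrite ltnS (leq_trans _ Xn) // ltnW.
Qed.

Lemma stdposT x : stdpos [set: 'I_n] x = x.
Proof.
rewrite /stdpos; apply: etrans (card_ltset (ltnW (ltn_ord x))); apply: eq_card => y.
by rewrite !inE.
Qed.

End Std.
Section PartGen.
Variable T : finType.
Implicit Types (Q : {set {set T}}) (D t : {set T}).

Definition part_ok Q D : Prop :=
  [/\ forall t, t \in Q -> t != set0,
      forall t, t \in Q -> t \subset D,
      forall x, x \in D -> exists2 t, t \in Q & x \in t &
      forall t1 t2 x, t1 \in Q -> t2 \in Q -> x \in t1 -> x \in t2 -> t1 = t2].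

Lemma partP Q D : reflect (part_ok Q D) (partition Q D).
Proof.
apply: (iffP and3P) => [[/eqP cov /trivIsetP tI s0]|[h0 hs hc hu]]; split.
- by move=> t tQ; apply: contraNneq s0 => <-.
- move=> t tQ; rewrite -cov; exact: bigcup_sup.
- by move=> x; rewrite -cov => /bigcupP[t tQ xt]; exists t.
- move=> t1 t2 x t1Q t2Q x1 x2; apply/eqP; apply/negPn/negP => ne.
  have := tI _ _ t1Q t2Q ne; rewrite -setI_eq0 => /eqP/setP/(_ x).
  by rewrite !inE x1 x2.
- apply/eqP/setP => x; apply/bigcupP/idP => [[t tQ xt]|xD].
    exact: (subsetP (hs t tQ)).
  by have [t tQ xt] := hc x xD; exists t.
- apply/trivIsetP => A B AQ BQ ne; rewrite -setI_eq0; apply/eqP/setP => x.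
  rewrite !inE; apply/negbTE/negP => /andP[xA xB].
  by move: ne; rewrite (hu A B x AQ BQ xA xB) eqxx.
- by apply/negP => /h0; rewrite eqxx.
Qed.

End PartGen.

Lemma ncP n (Q : {set {set 'I_n}}) :
  reflect (forall pi rho, pi \in Q -> rho \in Q -> pi != rho ->
            forall a b c d : 'I_n, a \in pi -> b \in pi -> c \in rho -> d \in rho ->
            a < c -> c < b -> b < d -> False)
          (noncrossing Q).
Proof.
apply: (iffP forallP) => [h pi rho piQ rhoQ ne a b c d ap bp cr dr ac cb bd|h pi].
  move: (h pi); rewrite piQ /= => /forallP/(_ rho); rewrite rhoQ ne /=.
  move/negP; apply; apply/existsP; exists a; apply/existsP; exists b.
  apply/existsP; exists c; apply/existsP; exists d; by rewrite ap bp cr dr ac cb bd.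
apply/implyP => piQ; apply/forallP => rho; apply/implyP => rhoQ; apply/implyP => ne.
apply/negP => /existsP[a /existsP[b /existsP[c /existsP[d]]]].
case/and5P => ap bp cr dr /and3P[ac cb bd].
exact: (h pi rho piQ rhoQ ne a b c d).
Qed.

Lemma nc_sub n (A B : {set {set 'I_n}}) : B \subset A -> noncrossing A -> noncrossing B.
Proof.
move=> /subsetP BA /ncP h; apply/ncP => pi rho piB rhoB; apply: h; exact: BA.
Qed.

Definition sameb m (A : {set {set 'I_m}}) (i j : 'I_m) :=
  [exists b in A, (i \in b) && (j \in b)].

Lemma part_eq (T : finType) (A B : {set {set T}}) :
  partition A setT -> partition B setT ->
  (forall i j, [exists b in A, (i \in b) && (j \in b)] =
               [exists b in B, (i \in b) && (j \in b)]) -> A = B.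
Proof.
move=> /partP[a0 _ ac au] /partP[b0 _ bc bu] h.
suff sub : forall (A B : {set {set T}}),
  (forall t, t \in A -> t != set0) ->
  (forall x, x \in setT -> exists2 t, t \in B & x \in t) ->
  (forall t1 t2 x, t1 \in A -> t2 \in A -> x \in t1 -> x \in t2 -> t1 = t2) ->
  (forall t1 t2 x, t1 \in B -> t2 \in B -> x \in t1 -> x \in t2 -> t1 = t2) ->
  (forall i j, [exists b in A, (i \in b) && (j \in b)] =
               [exists b in B, (i \in b) && (j \in b)]) -> A \subset B.
  by apply/eqP; rewrite eqEsubset !sub // => i j; rewrite h.
move=> {a0 ac au b0 bc bu h} {}A {}B a0 bc au bu h.
apply/subsetP => t tA; have /set0Pn[x xt] := a0 t tA.
have [t' t'B xt'] := bc x (in_setT x).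
suff -> : t = t' by [].
apply/setP => y; apply/idP/idP => [yt|yt'].
  have : [exists b in A, (x \in b) && (y \in b)].
    by apply/existsP; exists t; rewrite tA xt yt.
  rewrite h => /existsP[b /and3P[bB xb yb]].
  by rewrite (bu t' b x t'B bB xt' xb).
have : [exists b in B, (x \in b) && (y \in b)].
  by apply/existsP; exists t'; rewrite t'B xt' yt'.
rewrite -h => /existsP[b /and3P[bA xb yb]].
by rewrite (au t b x tA bA xt xb).
Qed.

Lemma tagged_eq m1 m2 (A : {set {set 'I_m1}}) (B : {set {set 'I_m2}}) :
  m1 = m2 -> partition A setT -> partition B setT ->
  (forall (i j : 'I_m1) (i' j' : 'I_m2), nat_of_ord i = nat_of_ord i' ->
      nat_of_ord j = nat_of_ord j' ->
      sameb A i j = sameb B i' j') ->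
  Tagged (fun k => {set {set 'I_k}}) A = Tagged (fun k => {set {set 'I_k}}) B.
Proof.
move=> e; subst m2 => pA pB h; congr Tagged; apply: part_eq => // i j.
exact: h.
Qed.

Lemma card_bij (T1 T2 : finType) (A : {set T1}) (B : {set T2})
  (f : T1 -> nat) (g : T2 -> nat) :
  {in A &, injective f} -> {in B &, injective g} ->
  (forall k, (exists2 a, a \in A & f a = k) <-> (exists2 b, b \in B & g b = k)) ->
  #|A| = #|B|.
Proof.
move=> fi gi h; rewrite !cardE.
rewrite -(size_map f) -(size_map g); apply: perm_size; apply: uniq_perm.
- by rewrite map_inj_in_uniq ?enum_uniq // => x y; rewrite !mem_enum; apply: fi.
- by rewrite map_inj_in_uniq ?enum_uniq // => x y; rewrite !mem_enum; apply: gi.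
move=> k; apply/mapP/mapP => [[a]|[b]]; rewrite mem_enum => xA ->.
  by have [b bB e] := (h (f a)).1 (ex_intro2 _ _ a xA erefl); exists b; rewrite ?mem_enum.
by have [a aA e] := (h (g b)).2 (ex_intro2 _ _ b xA erefl); exists a; rewrite ?mem_enum.
Qed.
Section Lift.
Variables (n : nat) (Y : {set 'I_n}).

Definition lift (b : {set 'I_#|Y|}) : {set 'I_n} :=
  [set y in Y | [exists i in b, stdpos Y y == i]].
Definition proj (t : {set 'I_n}) : {set 'I_#|Y|} :=
  [set i : 'I_#|Y| | [exists x in t, stdpos Y x == i]].

Definition spo (y : 'I_n) (yY : y \in Y) : 'I_#|Y| := Ordinal (stdpos_lt yY).

Lemma in_liftE (b : {set 'I_#|Y|}) (y : 'I_n) (yY : y \in Y) : (y \in lift b) = (spo yY \in b).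
Proof.
rewrite inE yY /=; apply/existsP/idP => [[i /andP[ib /eqP e]]|h].
  by have -> : spo yY = i by apply: val_inj.
by exists (spo yY); rewrite h /=.
Qed.

Lemma lift_subY (b : {set 'I_#|Y|}) : lift b \subset Y.
Proof. by apply/subsetP => y; rewrite inE => /andP[]. Qed.

Lemma in_proj (t : {set 'I_n}) (i : 'I_#|Y|) : (i \in proj t) = [exists x in t, stdpos Y x == i].
Proof. by rewrite inE. Qed.

Lemma proj_liftK (b : {set 'I_#|Y|}) : proj (lift b) = b.
Proof.
apply/setP => i; rewrite in_proj; apply/existsP/idP => [[x /andP[xl /eqP e]]|ib].
  have xY := subsetP (lift_subY b) x xl.
  by move: xl; rewrite (in_liftE _ xY); have -> : spo xY = i by apply: val_inj.
have [x xY e] := stdpos_onto (ltn_ord i).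
exists x; rewrite e eqxx andbT (in_liftE _ xY).
by have -> : spo xY = i by apply: val_inj.
Qed.

Lemma lift_projK (t : {set 'I_n}) : t \subset Y -> lift (proj t) = t.
Proof.
move=> tY; apply/setP => y; apply/idP/idP => [yl|yt].
  have yY := subsetP (lift_subY _) y yl.
  move: yl; rewrite (in_liftE _ yY) in_proj => /existsP[x /andP[xt /eqP e]].
  by rewrite -(stdpos_inj (subsetP tY x xt) yY e).
have yY := subsetP tY y yt.
by rewrite (in_liftE _ yY) in_proj; apply/existsP; exists y; rewrite yt eqxx.
Qed.

Lemma lift_inj : injective lift.
Proof. exact: can_inj proj_liftK. Qed.

Lemma proj_mono (s t : {set 'I_n}) : s \subset t -> proj s \subset proj t.
Proof.
move=> /subsetP st; apply/subsetP => i; rewrite !in_proj => /existsP[x /andP[xs e]].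
by apply/existsP; exists x; rewrite st.
Qed.

Lemma lift_mono (a b : {set 'I_#|Y|}) : a \subset b -> lift a \subset lift b.
Proof.
move=> /subsetP ab; apply/subsetP => y yl.
have yY := subsetP (lift_subY _) y yl.
by move: yl; rewrite !(in_liftE _ yY) => /ab.
Qed.

Lemma lift_subset (a b : {set 'I_#|Y|}) : (lift a \subset lift b) = (a \subset b).
Proof.
apply/idP/idP; last exact: lift_mono.
by move=> /proj_mono; rewrite !proj_liftK.
Qed.

Lemma lift0 : lift set0 = set0.
Proof. by apply/setP => y; rewrite !inE; case: (y \in Y) => //=; apply/existsP => [[i]]; rewrite inE. Qed.

Lemma liftT : lift setT = Y.
Proof.
apply/setP => y; apply/idP/idP => [/(subsetP (lift_subY _))//|yY].
by rewrite (in_liftE _ yY) inE.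
Qed.

Lemma lift_eq0 (b : {set 'I_#|Y|}) : (lift b == set0) = (b == set0).
Proof.
by rewrite -lift0 (inj_eq lift_inj).
Qed.

Lemma part_lift (A : {set {set 'I_#|Y|}}) :
  partition A setT = partition (lift @: A) Y.
Proof.
apply/partP/partP => [[h0 _ hc hu]|[h0 hs hc hu]]; split.
- by move=> t /imsetP[b bA ->]; rewrite lift_eq0 h0.
- by move=> t /imsetP[b bA ->]; exact: lift_subY.
- move=> y yY; have [b bA ib] := hc (spo yY) (in_setT _).
  by exists (lift b); [apply: imset_f | rewrite (in_liftE _ yY)].
- move=> t1 t2 y /imsetP[b1 b1A ->] /imsetP[b2 b2A ->] y1 y2.
  have yY := subsetP (lift_subY _) y y1.
  rewrite !(in_liftE _ yY) in y1 y2.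
  by rewrite (hu b1 b2 (spo yY) b1A b2A y1 y2).
- by move=> b bA; rewrite -lift_eq0 h0 // imset_f.
- by move=> b _; apply/subsetP => i; rewrite inE.
- move=> i _; have [y yY e] := stdpos_onto (ltn_ord i).
  have [t /imsetP[b bA ->] yt] := hc y yY.
  exists b => //; move: yt; rewrite (in_liftE _ yY).
  by have -> : spo yY = i by apply: val_inj.
- move=> b1 b2 i b1A b2A i1 i2; have [y yY e] := stdpos_onto (ltn_ord i).
  have ei : spo yY = i by apply: val_inj.
  apply: lift_inj; apply: (hu _ _ y); rewrite ?imset_f //.
    by rewrite (in_liftE _ yY) ei.
  by rewrite (in_liftE _ yY) ei.
Qed.

Lemma nc_lift (A : {set {set 'I_#|Y|}}) :
  noncrossing A = noncrossing (lift @: A).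
Proof.
apply/ncP/ncP => h.
  move=> pi rho /imsetP[b1 b1A ->] /imsetP[b2 b2A ->] ne a b c d ap bp cr dr ac cb bd.
  have aY := subsetP (lift_subY _) a ap; have bY := subsetP (lift_subY _) b bp.
  have cY := subsetP (lift_subY _) c cr; have dY := subsetP (lift_subY _) d dr.
  rewrite ?(in_liftE _ aY) ?(in_liftE _ bY) ?(in_liftE _ cY) ?(in_liftE _ dY) in ap bp cr dr.
  apply: (h b1 b2 b1A b2A _ _ _ _ _ ap bp cr dr).
  - by apply: contra ne => /eqP ->.
  - by rewrite /= stdpos_ltE.
  - by rewrite /= stdpos_ltE.
  - by rewrite /= stdpos_ltE.
move=> b1 b2 b1A b2A ne ia ib ic id ap bp cr dr ac cb bd.
have [a aY ea] := stdpos_onto (ltn_ord ia).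
have [b bY eb] := stdpos_onto (ltn_ord ib).
have [c cY ec] := stdpos_onto (ltn_ord ic).
have [d dY ed] := stdpos_onto (ltn_ord id).
have ea' : spo aY = ia by apply: val_inj.
have eb' : spo bY = ib by apply: val_inj.
have ec' : spo cY = ic by apply: val_inj.
have ed' : spo dY = id by apply: val_inj.
apply: (h (lift b1) (lift b2) _ _ _ a b c d); rewrite ?imset_f //.
- by rewrite (inj_eq lift_inj).
- by rewrite (in_liftE _ aY) ea'.
- by rewrite (in_liftE _ bY) eb'.
- by rewrite (in_liftE _ cY) ec'.
- by rewrite (in_liftE _ dY) ed'.
- by rewrite -(stdpos_ltE aY cY) ea ec.
- by rewrite -(stdpos_ltE cY bY) ec eb.
- by rewrite -(stdpos_ltE bY dY) eb ed.
Qed.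

Lemma stdpos_lift (t : {set 'I_#|Y|}) x (xY : x \in Y) :
  stdpos (lift t) x = stdpos t (spo xY).
Proof.
apply: (@card_bij _ _ _ _ (stdpos Y) val).
- move=> a b; rewrite !inE => /andP[/andP[aY _] _] /andP[/andP[bY _] _].
  exact: stdpos_inj.
- by move=> a b _ _; apply: val_inj.
move=> k; split => [[z]|[j]].
  rewrite inE => /andP[zl zx] <-.
  have zY := subsetP (lift_subY _) z zl.
  exists (spo zY) => //; rewrite inE -(in_liftE _ zY) zl /=.
  by rewrite /= stdpos_ltE.
rewrite inE => /andP[jt jx] <-.
have [z zY e] := stdpos_onto (ltn_ord j).
have ej : spo zY = j by apply: val_inj.
exists z => //; rewrite inE (in_liftE _ zY) ej jt /=.
by rewrite -(stdpos_ltE zY xY) e.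
Qed.

Lemma card_lift (t : {set 'I_#|Y|}) : #|lift t| = #|t|.
Proof.
apply: (@card_bij _ _ _ _ (stdpos Y) val).
- move=> a b al bl; apply: stdpos_inj; [exact: (subsetP (lift_subY t)) al | exact: (subsetP (lift_subY t)) bl].
- by move=> a b _ _; apply: val_inj.
move=> k; split => [[z zl <-]|[j jt <-]].
  have zY := subsetP (lift_subY _) z zl.
  by exists (spo zY) => //; rewrite -(in_liftE _ zY).
have [z zY e] := stdpos_onto (ltn_ord j).
have ej : spo zY = j by apply: val_inj.
by exists z => //; rewrite (in_liftE _ zY) ej.
Qed.

End Lift.
Arguments lift {n} Y b.
Section Restr.
Variable n : nat.
Implicit Types (P : {set {set 'I_n}}) (X : {set 'I_n}).

Definition trace P X := [set pi :&: X | pi in P & pi :&: X != set0].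

Lemma restrE P X : restr P X = proj X @: trace P X.
Proof. by rewrite /restr /trace -imset_comp. Qed.

Lemma trace_sub P X t : t \in trace P X -> t \subset X.
Proof. by case/imsetP => pi _ ->; apply: subsetIr. Qed.

Lemma lift_restr P X : lift X @: restr P X = trace P X.
Proof.
rewrite restrE -imset_comp -[RHS]imset_id; apply: eq_in_imset => t tT /=.
by rewrite lift_projK // (trace_sub tT).
Qed.

Lemma part_trace P X : partition P setT -> partition (trace P X) X.
Proof.
move=> /partP[h0 _ hc hu]; apply/partP; split.
- by move=> t; case/imsetP => pi; rewrite inE => /andP[_ ne] ->.
- by move=> t /trace_sub.
- move=> x xX; have [pi piP xpi] := hc x (in_setT x).
  exists (pi :&: X); last by rewrite inE xpi.
  by apply: imset_f; rewrite inE piP; apply/set0Pn; exists x; rewrite inE xpi.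
- move=> t1 t2 x /imsetP[p1 p1P ->] /imsetP[p2 p2P ->].
  rewrite inE in p1P; rewrite inE in p2P.
  case/andP: p1P => p1P _; case/andP: p2P => p2P _.
  rewrite !inE => /andP[x1 _] /andP[x2 _].
  by rewrite (hu p1 p2 x p1P p2P x1 x2).
Qed.

Lemma nc_trace P X : noncrossing P -> noncrossing (trace P X).
Proof.
move=> /ncP h; apply/ncP => t1 t2 /imsetP[p1 p1P ->] /imsetP[p2 p2P ->] ne a b c d.
rewrite inE in p1P; rewrite inE in p2P.
case/andP: p1P => p1P _; case/andP: p2P => p2P _.
rewrite !inE => /andP[ap _] /andP[bp _] /andP[cp _] /andP[dp _].
apply: (h p1 p2 p1P p2P _ a b c d ap bp cp dp).
by apply: contra ne => /eqP ->.
Qed.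

Lemma restr_part P X : partition P setT -> partition (restr P X) setT.
Proof. by move=> pP; rewrite part_lift lift_restr part_trace. Qed.

Lemma restr_nc P X : noncrossing P -> noncrossing (restr P X).
Proof. by move=> nP; rewrite nc_lift lift_restr nc_trace. Qed.

Lemma restr_ncpart P X : ncpart P -> ncpart (restr P X).
Proof. by case/andP => pP nP; rewrite /ncpart restr_part ?restr_nc. Qed.

Lemma isNCP_restr P X : ncpart P -> 0 < #|X| ->
  isNCP (Tagged (fun k => {set {set 'I_k}}) (restr P X)).
Proof. by move=> nP X0; rewrite /isNCP /= X0 restr_ncpart. Qed.

Lemma sameb_restr P X (i j : 'I_#|X|) :
  sameb (restr P X) i j =
  [exists x in X, exists y in X, [&& stdpos X x == i, stdpos X y == j & sameb P x y]].
Proof.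
apply/existsP/existsP => [[b /and3P[bR ib jb]]|[x /andP[xX /existsP[y /andP[yX /and3P[ei ej /existsP[pi /and3P[piP xp yp]]]]]]]].
  move: bR; rewrite restrE => /imsetP[t /imsetP[pi]]; rewrite inE => /andP[piP _] -> ebt.
  move: ib jb; rewrite ebt !in_proj => /existsP[x /andP[]]; rewrite inE => /andP[xp xX] ei.
  move=> /existsP[y /andP[]]; rewrite inE => /andP[yp yX] ej.
  exists x; rewrite xX /=; apply/existsP; exists y; rewrite yX ei ej /=.
  by apply/existsP; exists pi; rewrite piP xp yp.
exists (proj X (pi :&: X)); apply/and3P; split.
- rewrite restrE; apply: imset_f; apply: imset_f; rewrite inE piP /=.
  by apply/set0Pn; exists x; rewrite inE xp xX.
- by rewrite in_proj; apply/existsP; exists x; rewrite inE xp xX ei.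
- by rewrite in_proj; apply/existsP; exists y; rewrite inE yp yX ej.
Qed.

Lemma restr_setT P : partition P setT ->
  Tagged (fun k => {set {set 'I_k}}) (restr P setT) = Tagged (fun k => {set {set 'I_k}}) P.
Proof.
move=> pP; apply: tagged_eq; rewrite ?restr_part //; first by rewrite cardsT card_ord.
move=> i j i' j' ei ej; rewrite sameb_restr.
apply/existsP/idP => [[x /andP[_ /existsP[y /andP[_ /and3P[/eqP xi /eqP yj s]]]]]|s].
  rewrite stdposT in xi; rewrite stdposT in yj.
  have -> : i' = x by apply: val_inj; rewrite /= -ei xi.
  by have -> : j' = y by apply: val_inj; rewrite /= -ej yj.
exists i'; rewrite inE /=; apply/existsP; exists j'; rewrite inE /= !stdposT.
by rewrite -ei -ej !eqxx.
Qed.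

End Restr.

Lemma restr_restr n (P : {set {set 'I_n}}) (Y : {set 'I_n}) (t : {set 'I_#|Y|}) : partition P setT ->
  Tagged (fun k => {set {set 'I_k}}) (restr (restr P Y) t) =
  Tagged (fun k => {set {set 'I_k}}) (restr P (lift Y t)).
Proof.
move=> pP; have pY := restr_part Y pP.
apply: tagged_eq; [by rewrite card_lift | exact: restr_part | exact: restr_part | ].
move=> i j i' j' ei ej; rewrite sameb_restr sameb_restr.
apply/existsP/existsP.
  case=> a /andP[at_ /existsP[b /andP[bt /and3P[/eqP ai /eqP bj]]]].
  rewrite sameb_restr => /existsP[x /andP[xY /existsP[y /andP[yY /and3P[/eqP xa /eqP yb s]]]]].
  have xa' : spo xY = a by apply: val_inj.
  have yb' : spo yY = b by apply: val_inj.
  exists x; rewrite (in_liftE _ xY) xa' at_ /=; apply/existsP; exists y.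
  rewrite (in_liftE _ yY) yb' bt /= s !stdpos_lift xa' yb' andbT.
  by rewrite ai bj ei ej !eqxx.
case=> x /andP[xl /existsP[y /andP[yl /and3P[/eqP xi /eqP yj s]]]].
have xY := subsetP (lift_subY t) x xl; have yY := subsetP (lift_subY t) y yl.
rewrite (in_liftE _ xY) in xl; rewrite (in_liftE _ yY) in yl.
exists (spo xY); rewrite xl /=; apply/existsP; exists (spo yY); rewrite yl /=.
rewrite -!stdpos_lift xi yj ei ej !eqxx /= sameb_restr.
apply/existsP; exists x; rewrite xY /=; apply/existsP; exists y.
by rewrite yY s !eqxx.
Qed.

Definition wt (w : seq NCP) : nat := \sum_(q <- w) ncp_n q.

Lemma wt_cat u v : wt (u ++ v) = wt u + wt v.
Proof. by rewrite /wt big_cat. Qed.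

Lemma ncpP (p : NCP) : 0 < ncp_n p /\ ncpart (ncp_P p).
Proof. by have /andP[h1 h2] := valP p. Qed.

Lemma ncp_part (p : NCP) : partition (ncp_P p) setT.
Proof. by case/andP: (ncpP p).2. Qed.

Lemma toNCP_none n (A : {set {set 'I_n}}) : n = 0 -> toNCP A = None.
Proof. by move=> n0; subst n; rewrite /toNCP insubF. Qed.

Lemma toNCP_restr_some n (P : {set {set 'I_n}}) (X : {set 'I_n}) (nP : ncpart P) (X0 : 0 < #|X|) :
  toNCP (restr P X) = Some (Sub (Tagged (fun k => {set {set 'I_k}}) (restr P X)) (isNCP_restr nP X0)).
Proof. exact: insubT. Qed.

Lemma wt_opt_restr n (P : {set {set 'I_n}}) (X : {set 'I_n}) : ncpart P ->
  wt (seq_of_opt (toNCP (restr P X))) = #|X|.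
Proof.
move=> nP; have [X0|] := posnP #|X|; first by rewrite (toNCP_none _ X0) X0 /wt big_nil.
move=> X0; rewrite (toNCP_restr_some nP X0) /wt /= big_cons big_nil addn0.
by [].
Qed.

Lemma wt_pmap (T : Type) (f : T -> option NCP) s :
  wt (pmap f s) = \sum_(i <- s) wt (seq_of_opt (f i)).
Proof.
rewrite /wt big_pmap; apply: eq_bigr => i _; case: (f i) => [q|] /=.
  by rewrite big_cons big_nil addn0.
by rewrite big_nil.
Qed.

Lemma gap_card_sum n (X : {set 'I_n}) :
  \sum_(i <- iota 0 #|X|.+1) #|gap X i| = #|~: X|.
Proof.
have -> : iota 0 #|X|.+1 = index_iota 0 #|X|.+1 by rewrite /index_iota subn0.
rewrite big_mkord.
rewrite -(sum1_card (mem (~: X))) (partition_big (fun y => (inord (stdpos X y) : 'I_#|X|.+1)) xpredT) //=.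
apply: eq_bigr => j _; rewrite -sum1_card; apply: eq_bigl => y.
rewrite !inE; congr (_ && _); apply/eqP/eqP => e.
  by apply: val_inj; rewrite /= inordK ?e // ltnS stdpos_le.
by rewrite -e inordK // ltnS stdpos_le.
Qed.

Lemma wt_Ubar n (P : {set {set 'I_n}}) (L : {set {set 'I_n}}) : ncpart P -> wt (cut_Ubar P L) = #|~: unionL L|.
Proof.
move=> nP; rewrite /cut_Ubar wt_pmap -gap_card_sum; apply: eq_bigr => i _.
exact: wt_opt_restr.
Qed.

Lemma lowerset0 n (P : {set {set 'I_n}}) : lowerset P set0.
Proof. by rewrite /lowerset sub0set; apply/forallP => pi; rewrite inE. Qed.

Lemma unionL0 n : unionL (set0 : {set {set 'I_n}}) = set0.
Proof. by rewrite /unionL big_set0. Qed.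

Lemma unionL_pos n (P : {set {set 'I_n}}) (L : {set {set 'I_n}}) : partition P setT -> L \subset P ->
  L != set0 -> 0 < #|unionL L|.
Proof.
move=> /partP[h0 _ _ _] LP /set0Pn[pi piL].
have /set0Pn[x xp] := h0 pi (subsetP LP pi piL).
by apply/card_gt0P; exists x; apply/bigcupP; exists pi.
Qed.

Lemma cut_L_nonnil n (P : {set {set 'I_n}}) (L : {set {set 'I_n}}) : ncpart P -> L \subset P ->
  L != set0 -> cut_L P L != [::].
Proof.
move=> nP LP ne; have pP : partition P setT by case/andP: nP.
by rewrite /cut_L (toNCP_restr_some nP (unionL_pos pP LP ne)).
Qed.

Lemma cut_L_set0 n (P : {set {set 'I_n}}) : cut_L P set0 = [::].
Proof.
by rewrite /cut_L unionL0 (toNCP_none _ (cards0 _)).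
Qed.
Lemma gap_set0 n : gap (set0 : {set 'I_n}) 0 = setT.
Proof.
apply/setP => y; rewrite !inE /=; apply/eqP.
rewrite /stdpos; apply/eqP; rewrite cards_eq0; apply/eqP/setP => z.
by rewrite !inE.
Qed.

Lemma NCP_eta (p : NCP) :
  Tagged (fun k => {set {set 'I_k}}) (ncp_P p) = val p.
Proof. by rewrite /ncp_P /ncp_n; case: (val p). Qed.

Lemma toNCP_setT (p : NCP) : toNCP (restr (ncp_P p) setT) = Some p.
Proof. by rewrite /toNCP restr_setT ?ncp_part // NCP_eta valK. Qed.

Lemma cut_Ubar_set0 (p : NCP) : cut_Ubar (ncp_P p) set0 = [:: p].
Proof.
rewrite /cut_Ubar unionL0 cards0 /= gap_set0.
by rewrite toNCP_setT.
Qed.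

Lemma sum_cuts_single (R : nzRingType) (p : NCP) (H : seq NCP * seq NCP -> R) :
  (forall c, c.1 != [::] -> H c = 0%R) ->
  (\sum_(c <- cuts p) H c)%R = H ([::], [:: p]).
Proof.
move=> H0; rewrite /cuts big_map big_enum /=.
rewrite (bigD1 set0) /=; last by rewrite inE lowerset0.
rewrite cut_L_set0 cut_Ubar_set0 big1 => [|L]; first by rewrite addr0.
rewrite inE => /andP[/andP[LP _] ne]; apply: H0 => /=.
by apply: cut_L_nonnil => //; exact: (ncpP p).2.
Qed.

Lemma sum_allcuts_single (R : nzRingType) (w : seq NCP) (G : seq NCP * seq NCP -> R) :
  (forall d, d.1 != [::] -> G d = 0%R) ->
  (\sum_(d <- allcuts w) G d)%R = G ([::], w).
Proof.
elim: w G => [|p w IH] G G0 /=; first by rewrite big_cons big_nil addr0.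
rewrite big_allpairs_dep /=.
rewrite (eq_bigr (fun c => G (c.1, c.2 ++ w))); last first.
  move=> c _; rewrite (IH (fun d => G (c.1 ++ d.1, c.2 ++ d.2))) ?cats0 //.
  by move=> d /= ne; apply: G0 => /=; case: (c.1) => //.
rewrite (@sum_cuts_single _ p (fun c => G (c.1, c.2 ++ w))) //.
by move=> c ne; apply: G0.
Qed.
Lemma cross0 n (Q : {set {set 'I_n}}) t1 t2 (x0 x a b : 'I_n) :
  noncrossing Q -> t1 \in Q -> t2 \in Q -> t1 != t2 ->
  x0 \in t1 -> nat_of_ord x0 = 0 -> x \in t1 -> a \in t2 -> b \in t2 ->
  a < x -> x < b -> x0 \notin t2 -> False.
Proof.
move=> /ncP h t1Q t2Q ne x01 x00 x1 a2 b2 ax xb x02.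
apply: (h t1 t2 t1Q t2Q ne x0 x a b x01 x1 a2 b2) => //.
rewrite x00 lt0n; apply/negP => /eqP a0.
have : a = x0 by apply: val_inj; rewrite /= a0.
by move=> e; move: x02; rewrite -e a2.
Qed.

Lemma conv0 n (Q : {set {set 'I_n}}) t1 t2 (x0 c : 'I_n) :
  noncrossing Q -> t1 \in Q -> t2 \in Q -> t1 != t2 ->
  x0 \in t1 -> nat_of_ord x0 = 0 -> c \in t1 -> c \in Conv t2 -> c \notin t2 ->
  x0 \notin t2 -> False.
Proof.
move=> nQ t1Q t2Q ne x01 x00 c1; rewrite inE => /existsP[a /andP[a2 /existsP[b /andP[b2 /andP[ac cb]]]]] c2 x02.
have ac' : a < c.
  rewrite ltn_neqAle ac andbT; apply/eqP => e.
  have ec : a = c by apply: val_inj.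
  by move: c2; rewrite -ec a2.
have cb' : c < b.
  rewrite ltn_neqAle cb andbT; apply/eqP => e.
  have ec : c = b by apply: val_inj.
  by move: c2; rewrite ec b2.
exact: (cross0 nQ t1Q t2Q ne x01 x00 c1 a2 b2 ac' cb' x02).
Qed.

Lemma lowerset_closed n (P S : {set {set 'I_n}}) : S \subset P ->
  (forall s t, t \in S -> arrow0 P s t -> s \in S) -> lowerset P S.
Proof.
move=> SP h; rewrite /lowerset SP /=; apply/forallP => t; apply/implyP => tS.
apply/forallP => s; apply/implyP => sP; apply/implyP => /connectP[q].
elim: q s {sP} => [|y q IH] s /=; first by move=> _ e; rewrite e in tS.
case/andP => sy pq e; apply: (h s y) => //; exact: IH pq e.
Qed.

Lemma card_restr n (P : {set {set 'I_n}}) (X : {set 'I_n}) : partition P setT ->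
  #|restr P X| = #|[set pi in P | pi :&: X != set0]|.
Proof.
move=> /partP[_ _ _ hu]; rewrite /restr card_in_imset // => p1 p2.
rewrite !inE => /andP[p1P ne1] /andP[p2P ne2] e.
have e' : p1 :&: X = p2 :&: X.
  by rewrite -(lift_projK (subsetIr p1 X)) -(lift_projK (subsetIr p2 X)); congr lift; exact: e.
case/set0Pn: ne1 => x; rewrite e' !inE => /andP[x2 xX].
have x1 : x \in p1 :&: X by rewrite e' inE x2 xX.
by move: x1; rewrite inE => /andP[x1 _]; apply: (hu _ _ x).
Qed.

Lemma meetL n (P L : {set {set 'I_n}}) : partition P setT -> L \subset P ->
  [set pi in P | pi :&: unionL L != set0] = L.
Proof.
move=> /partP[h0 _ _ hu] LP; apply/setP => pi; rewrite inE.
apply/andP/idP => [[piP /set0Pn[x]]|piL].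
  rewrite inE => /andP[xp /bigcupP[p' p'L xp']].
  by rewrite (hu pi p' x piP (subsetP LP _ p'L) xp xp').
split; first exact: subsetP LP _ piL.
have /set0Pn[x xp] := h0 pi (subsetP LP _ piL).
by apply/set0Pn; exists x; rewrite inE xp; apply/bigcupP; exists pi.
Qed.

Definition LS1 (p : NCP) : {set {set {set 'I_(ncp_n p)}}} :=
  [set L : {set {set 'I_(ncp_n p)}} | lowerset (ncp_P p) L &&
               [exists pi in L, exists x in pi, nat_of_ord x == 0%N]].

Lemma cuts1E (p : NCP) :
  cuts1 p = [seq (cut_L (ncp_P p) L, cut_Ubar (ncp_P p) L) | L <- enum (LS1 p)].
Proof. by []. Qed.

Lemma LS1_sub (p : NCP) L : L \in LS1 p -> L \subset ncp_P p.
Proof. by rewrite inE => /andP[/andP[]]. Qed.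

Lemma LS1_ne (p : NCP) L : L \in LS1 p -> L != set0.
Proof.
rewrite inE => /andP[_ /existsP[pi /andP[piL _]]].
by apply/set0Pn; exists pi.
Qed.

Lemma cardsC_ord n (X : {set 'I_n}) : #|~: X| = n - #|X|.
Proof.
have Xn : #|X| <= n by have := max_card (mem X); rewrite card_ord.
by apply/eqP; rewrite -(eqn_add2l #|X|) cardsC card_ord subnKC.
Qed.

Lemma cuts1_props (p : NCP) c : c \in cuts1 p -> c.1 != [::] /\ wt c.2 < ncp_n p.
Proof.
rewrite cuts1E => /mapP[L]; rewrite mem_enum => LS ->; split => /=.
  by apply: cut_L_nonnil; [exact: (ncpP p).2 | exact: LS1_sub | exact: LS1_ne].
rewrite wt_Ubar ?(ncpP p).2 //.
have := unionL_pos (ncp_part p) (LS1_sub LS) (LS1_ne LS).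
rewrite cardsC_ord => h; rewrite ltn_subrL h /=.
exact: (ncpP p).1.
Qed.

Lemma cuts_wt (p : NCP) c : c \in cuts p -> wt c.2 <= ncp_n p.
Proof.
case/mapP => L _ -> /=; rewrite wt_Ubar ?(ncpP p).2 //.
by rewrite cardsC_ord leq_subr.
Qed.

Lemma allcuts_wt w d : d \in allcuts w -> wt d.2 <= wt w.
Proof.
elim: w d => [|p w IH] d /=; first by rewrite inE => /eqP ->.
case/allpairsPdep => c [d' [cin din ->]] /=.
rewrite wt_cat /wt big_cons -/(wt w) leq_add //; first exact: cuts_wt.
exact: IH.
Qed.

Lemma halfprec_ext (R : fieldType) (k f g : seq NCP -> R) w :
  (forall u, wt u < wt w -> f u = g u) -> halfprec k f w = halfprec k g w.
Proof.
case: w => [|p w] //= h; rewrite !big_seq; apply: eq_bigr => c cin.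
rewrite !big_seq; apply: eq_bigr => d din; congr (_ * _)%R; apply: h.
rewrite wt_cat /wt big_cons -/(wt w) -addSn leq_add //.
  exact: (cuts1_props cin).2.
exact: allcuts_wt.
Qed.

Lemma fix_unique (R : fieldType) (k f g : seq NCP -> R) :
  (forall w, f w = (eps R w + halfprec k f w)%R) ->
  (forall w, g w = (eps R w + halfprec k g w)%R) ->
  forall w, f w = g w.
Proof.
move=> hf hg w; have [m] := ubnP (wt w); elim: m w => // m IH w lt.
rewrite hf hg; congr (_ + _)%R; apply: halfprec_ext => u lu.
by apply: IH; apply: leq_trans lu _.
Qed.
Lemma LS1_single (p : NCP) (x0 : 'I_(ncp_n p)) pi0 :
  nat_of_ord x0 = 0%N -> pi0 \in ncp_P p -> x0 \in pi0 -> [set pi0] \in LS1 p.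
Proof.
move=> x00 pi0P x0p; have /partP[_ _ _ hu] := ncp_part p.
have nP := (andP (ncpP p).2).2.
rewrite inE; apply/andP; split; last first.
  by apply/existsP; exists pi0; rewrite inE eqxx /=; apply/existsP; exists x0; rewrite x0p x00.
apply: lowerset_closed; first by rewrite sub1set.
move=> s t; rewrite inE => /eqP -> /and3P[sP _ /set0Pn[c]]; rewrite inE => /andP[cs cp].
rewrite inE; apply/eqP/eqP/negPn/negP => ne.
have ne' : pi0 != s by rewrite eq_sym.
apply: (conv0 nP pi0P sP ne' x0p x00 cp cs).
  by apply/negP => cs'; move: ne; rewrite (hu s pi0 c sP pi0P cs' cp) eqxx.
by apply/negP => xs; move: ne; rewrite (hu s pi0 x0 sP pi0P xs x0p) eqxx.
Qed.

Lemma einf_cut_L (R : fieldType) (p : NCP) L : L \in LS1 p ->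
  einf R (cut_L (ncp_P p) L) = (#|L| == 1%N)%:R%R.
Proof.
move=> LS; rewrite /cut_L.
rewrite (toNCP_restr_some (ncpP p).2 (unionL_pos (ncp_part p) (LS1_sub LS) (LS1_ne LS))) /=.
by rewrite card_restr ?ncp_part // meetL ?ncp_part ?LS1_sub.
Qed.

Lemma sum_einf (R : fieldType) (p : NCP) :
  (\sum_(L in LS1 p) einf R (cut_L (ncp_P p) L))%R = 1%R.
Proof.
pose x0 : 'I_(ncp_n p) := Ordinal (ncpP p).1.
have /partP[_ _ hc hu] := ncp_part p.
have [pi0 pi0P x0p] := hc x0 (in_setT _).
have S0 := @LS1_single p x0 pi0 erefl pi0P x0p.
rewrite (bigD1 [set pi0]) //= einf_cut_L // cards1 eqxx big1 ?addr0 // => L /andP[LS ne].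
rewrite einf_cut_L //; case: cards1P => [[pi epi]|//].
have piP : pi \in ncp_P p by move: (LS1_sub LS); rewrite epi sub1set.
move: (LS); rewrite epi inE => /andP[_ /existsP[t /andP[]]].
rewrite inE => /eqP -> /existsP[x /andP[xp /eqP x_0]].
have ex : x = x0 by apply: val_inj.
exfalso; move/negP: ne; apply; rewrite epi (hu pi pi0 x0 piP pi0P _ x0p) //.
by rewrite -ex.
Qed.

Lemma psi_one (R : fieldType) (psi : seq NCP -> R) :
  (forall w, psi w = (eps R w + halfprec (@einf R) psi w)%R) ->
  forall w, psi w = 1%R.
Proof.
move=> h w; have [m] := ubnP (wt w); elim: m w => // m IH [|p w] lt.
  by rewrite h /= addr0.
rewrite h /= add0r.
transitivity (\sum_(c <- cuts1 p) einf R c.1)%R.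
  rewrite big_seq [RHS]big_seq; apply: eq_bigr => c cin.
  have [c1 wc] := cuts1_props cin.
  rewrite (@sum_allcuts_single _ w (fun d => einf R (c.1 ++ d.1) * psi (c.2 ++ d.2))%R).
    rewrite cats0 IH ?mulr1 //.
    rewrite wt_cat; move: lt; rewrite ltnS; apply: leq_trans.
    by rewrite /wt big_cons -/(wt w) -addSn leq_add2r.
  move=> d; case: (c.1) c1 => // x s _; case: (d.1) => // y t _.
  by case: s => [|? ?]; rewrite /= mul0r.
by rewrite cuts1E big_map big_enum /= sum_einf.
Qed.
Section Coarse.
Variable R : fieldType.
Variable kappa : seq NCP -> R.
Local Open Scope ring_scope.

Definition kr n (P : {set {set 'I_n}}) (t : {set 'I_n}) : R :=
  \prod_(q <- seq_of_opt (toNCP (restr P t))) kappa [:: q].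

Definition refD n (P : {set {set 'I_n}}) (D : {set 'I_n}) (Q : {set {set 'I_n}}) :=
  [forall pi in P, (pi :&: D != set0) ==> [exists t in Q, pi :&: D \subset t]].

Definition NCC n (P : {set {set 'I_n}}) (D : {set 'I_n}) : {set {set {set 'I_n}}} :=
  [set Q : {set {set 'I_n}} | [&& partition Q D, noncrossing Q & refD P D Q]].

Definition Zs n (P : {set {set 'I_n}}) (D : {set 'I_n}) : R :=
  \sum_(Q in NCC P D) \prod_(t in Q) kr P t.

Definition Zp (p : NCP) : R := \sum_(c <- coarsen p) charB kappa c.2.

Definition Zopt (o : option NCP) : R := \prod_(q <- seq_of_opt o) Zp q.

Lemma charB_cat u v : charB kappa (u ++ v) = charB kappa u * charB kappa v.
Proof. by rewrite /charB big_cat. Qed.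

Lemma charB_pmap (T : Type) (g : T -> option NCP) s :
  charB kappa (pmap g s) = \prod_(x <- s) \prod_(q <- seq_of_opt (g x)) kappa [:: q].
Proof.
rewrite /charB big_pmap; apply: eq_bigr => x _; case: (g x) => [q|] /=.
  by rewrite big_cons big_nil mulr1.
by rewrite big_nil.
Qed.

Lemma coact_prod (psi : seq NCP -> R) : (forall w, psi w = 1) ->
  forall w, coact psi (charB kappa) w = \prod_(q <- w) Zp q.
Proof.
move=> h1; elim => [|p w IH]; first by rewrite /coact big_cons big_nil h1 /charB !big_nil mulr1 addr0.
rewrite /coact /= big_allpairs_dep big_cons /= -IH /Zp big_distrl /=.
apply: eq_bigr => c _; rewrite /coact big_distrr /=; apply: eq_bigr => d _.
by rewrite !h1 !mul1r charB_cat.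
Qed.

Lemma NCC_setT n (P : {set {set 'I_n}}) : partition P setT ->
  NCC P setT = [set Q : {set {set 'I_n}} | ncpart Q && refines P Q].
Proof.
move=> /partP[h0 _ _ _]; apply/setP => Q; rewrite !inE /ncpart -andbA.
congr [&& _, _ & _]; apply/forallP/forallP => h pi; apply/implyP => piP;
  move: (h pi); rewrite piP /= setIT.
  by rewrite h0.
by move=> ->; rewrite implybT.
Qed.

Lemma Zp_eq (p : NCP) : Zp p = Zs (ncp_P p) setT.
Proof.
rewrite /Zp /coarsen big_pmap /Zs NCC_setT ?ncp_part // -big_enum /=.
rewrite big_seq [RHS]big_seq; apply: eq_bigr => Q; rewrite mem_enum inE => /andP[nQ _].
rewrite /toNCP insubT /=; first by rewrite /isNCP /= nQ (ncpP p).1.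
move=> h; rewrite /quotNC charB_pmap big_enum /=.
by [].
Qed.

Lemma kr_lift n (P : {set {set 'I_n}}) (Y : {set 'I_n}) (t : {set 'I_#|Y|}) :
  partition P setT -> kr (restr P Y) t = kr P (lift Y t).
Proof. by move=> pP; rewrite /kr /toNCP restr_restr. Qed.

Lemma NCC_lift n (P : {set {set 'I_n}}) (Y : {set 'I_n}) : partition P setT ->
  NCC P Y = (fun Q' : {set {set 'I_#|Y|}} => lift Y @: Q') @: NCC (restr P Y) setT.
Proof.
move=> pP; apply/setP => Q; apply/idP/imsetP => [|[Q' Q'N ->]].
  rewrite inE => /and3P[pQ nQ rQ].
  have QY : forall t, t \in Q -> t \subset Y by case/partP: pQ.
  have eQ : lift Y @: (proj Y @: Q) = Q.
    rewrite -imset_comp -[RHS]imset_id; apply: eq_in_imset => t tQ /=.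
    exact: lift_projK (QY t tQ).
  exists (proj Y @: Q) => //; rewrite inE part_lift nc_lift eQ pQ nQ /=.
  apply/forallP => a; apply/implyP; rewrite restrE => /imsetP[t /imsetP[pi]].
  rewrite inE => /andP[piP ne] -> ->; apply/implyP => _.
  move/forallP: rQ => /(_ pi); rewrite piP ne /= => /existsP[u /andP[uQ su]].
  by apply/existsP; exists (proj Y u); rewrite imset_f //= setIT proj_mono.
move: Q'N; rewrite !inE => /and3P[pQ nQ rQ].
rewrite -part_lift -nc_lift pQ nQ /=.
apply/forallP => pi; apply/implyP => piP; apply/implyP => ne.
have aA : proj Y (pi :&: Y) \in restr P Y.
  by rewrite restrE; apply: imset_f; apply: imset_f; rewrite inE piP.
move/forallP: rQ => /(_ (proj Y (pi :&: Y))); rewrite aA /= setIT.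
have -> : proj Y (pi :&: Y) != set0.
  apply: contra ne => /eqP e; rewrite -(lift_projK (subsetIr pi Y)) e lift0 //.
move=> /existsP[t /andP[tQ st]]; apply/existsP; exists (lift Y t).
by rewrite imset_f //= -(lift_projK (subsetIr pi Y)) lift_subset.
Qed.

Lemma Zs_restr n (P : {set {set 'I_n}}) (Y : {set 'I_n}) : partition P setT ->
  Zs (restr P Y) setT = Zs P Y.
Proof.
move=> pP; rewrite /Zs [in RHS](NCC_lift Y pP) big_imset /=; last first.
  by move=> A B _ _; apply: imset_inj; apply: lift_inj.
apply: eq_bigr => Q' _; rewrite big_imset /=; last by move=> a b _ _; apply: lift_inj.
by apply: eq_bigr => t _; rewrite kr_lift.
Qed.

Lemma NCC_set0 n (P : {set {set 'I_n}}) : NCC P set0 = [set set0].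
Proof.
apply/setP => Q; rewrite !inE; apply/idP/idP => [/and3P[/partP[h0 hs _ _] _ _]|/eqP ->].
  apply/eqP/setP => t; rewrite inE; apply/negbTE/negP => tQ.
  by move: (h0 t tQ) (hs t tQ); rewrite subset0 => /negbTE ->.
apply/and3P; split.
- by apply/partP; split => // [t|t|x|t1 t2 x]; rewrite ?inE.
- by apply/ncP => pi rho; rewrite inE.
- by apply/forallP => pi; rewrite setI0 eqxx /= implybT.
Qed.

Lemma Zs_set0 n (P : {set {set 'I_n}}) : Zs P set0 = 1.
Proof. by rewrite /Zs NCC_set0 big_set1 big_set0. Qed.

Lemma Zopt_restr n (P : {set {set 'I_n}}) (Y : {set 'I_n}) : ncpart P ->
  Zopt (toNCP (restr P Y)) = Zs P Y.
Proof.
move=> nP; have pP : partition P setT by case/andP: nP.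
have [Y0|Y0] := posnP #|Y|.
  by rewrite (toNCP_none _ Y0) (cards0_eq Y0) Zs_set0 /Zopt big_nil.
by rewrite (toNCP_restr_some nP Y0) /Zopt big_cons big_nil mulr1 Zp_eq Zs_restr.
Qed.

End Coarse.
Section Gaps.
Variable n : nat.
Implicit Types (X Y t : {set 'I_n}) (y z x : 'I_n).

Lemma Conv_mono X Y : X \subset Y -> Conv X \subset Conv Y.
Proof.
move=> /subsetP XY; apply/subsetP => x; rewrite !inE.
case/existsP => a /andP[aX /existsP[b /andP[bX h]]].
by apply/existsP; exists a; rewrite XY //=; apply/existsP; exists b; rewrite XY.
Qed.

Lemma gapE X (i : nat) y : (y \in gap X i) = (y \notin X) && (stdpos X y == i).
Proof. by rewrite inE. Qed.

Lemma in_gap X y : y \notin X -> y \in gap X (stdpos X y).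
Proof. by move=> yX; rewrite gapE yX eqxx. Qed.

Lemma gap_disjX X (i : nat) y : y \in gap X i -> y \notin X.
Proof. by rewrite gapE => /andP[]. Qed.

Lemma gap_noX X (i : nat) y z x : y \in gap X i -> z \in gap X i -> x \in X ->
  y < x -> x < z -> False.
Proof.
rewrite !gapE => /andP[_ /eqP yi] /andP[_ /eqP zi] xX yx xz.
have h1 := stdpos_mono X (ltnW yx).
have h2 := stdpos_strict xX xz.
by move: (leq_ltn_trans h1 h2); rewrite yi zi ltnn.
Qed.

Lemma gap_between X y z : y \notin X -> y < z -> stdpos X y != stdpos X z ->
  exists2 x, x \in X & (y < x) && (x < z).
Proof.
move=> yX yz ne.
have lt : stdpos X y < stdpos X z by rewrite ltn_neqAle ne stdpos_mono // ltnW.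
have [x xX /andP[yx xz]] := stdpos_between yz lt.
exists x => //; rewrite xz andbT ltn_neqAle yx andbT.
apply/eqP => e; have ey : y = x by apply: val_inj.
by rewrite ey xX in yX.
Qed.

Lemma single_gap X t y : y \in t -> (forall z, z \in t -> z \notin X) ->
  (forall a b x, a \in t -> b \in t -> x \in X -> a < x -> x < b -> False) ->
  t \subset gap X (stdpos X y).
Proof.
move=> yt tX h; apply/subsetP => z zt; rewrite gapE tX //=.
apply/negPn/negP => ne.
case: (ltngtP y z) => [yz|zy|e].
- rewrite eq_sym in ne.
  have [x xX /andP[yx xz]] := gap_between (tX y yt) yz ne.
  exact: (h y z x).
- have [x xX /andP[zx xy]] := gap_between (tX z zt) zy ne.
  exact: (h z y x).
- have ez : z = y by apply: val_inj.
  by rewrite ez eqxx in ne.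
Qed.

Lemma gap_big X (i : nat) : #|X| < i -> gap X i = set0.
Proof.
move=> lt; apply/setP => y; rewrite gapE inE; apply/negbTE.
rewrite negb_and; apply/orP; right; apply/eqP => e.
by move: (stdpos_le X y); rewrite e leqNgt lt.
Qed.

Lemma card_le_n X : #|X| <= n.
Proof. by have := max_card (mem X); rewrite card_ord. Qed.

Definition gi X y : 'I_n.+1 := inord (stdpos X y).

Lemma giE X y : nat_of_ord (gi X y) = stdpos X y.
Proof. by rewrite /gi inordK // ltnS (leq_trans (stdpos_le X y)) // card_le_n. Qed.

Lemma gap_inj X (i j : 'I_n.+1) y : y \in gap X i -> y \in gap X j -> i = j.
Proof.
by rewrite !gapE => /andP[_ /eqP ei] /andP[_ /eqP ej]; apply: val_inj; rewrite /= -ei -ej.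
Qed.

End Gaps.
Section Main.
Variables (n : nat) (P : {set {set 'I_n}}) (x0 : 'I_n).
Hypotheses (pP : partition P setT) (nP : noncrossing P) (x00 : nat_of_ord x0 = 0).

Lemma P_ne0 pi : pi \in P -> pi != set0.
Proof. by case/partP: pP => h _ _ _; apply: h. Qed.

Lemma P_cov x : exists2 pi, pi \in P & x \in pi.
Proof. by case/partP: pP => _ _ h _; apply: h. Qed.

Lemma P_uniq pi1 pi2 x : pi1 \in P -> pi2 \in P -> x \in pi1 -> x \in pi2 -> pi1 = pi2.
Proof. by case/partP: pP => _ _ _ h; apply: h. Qed.

Lemma is_x0 x : nat_of_ord x = 0 -> x = x0.
Proof. by move=> e; apply: val_inj; rewrite /= e x00. Qed.

Definition LSn := [set L : {set {set 'I_n}} | lowerset P L &&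
               [exists pi in L, exists x in pi, nat_of_ord x == 0%N]].

Definition LQ (Q : {set {set 'I_n}}) := [set pi in P |
  [exists t in Q, [exists x in t, nat_of_ord x == 0%N] && (pi \subset t)]].

Definition famT := {ffun 'I_n.+1 -> {set {set 'I_n}}}.

Section FixL.
Variable L : {set {set 'I_n}}.
Hypothesis LS : L \in LSn.

Lemma L_low : lowerset P L.
Proof. by move: LS; rewrite inE => /andP[]. Qed.

Lemma L_sub : L \subset P.
Proof. by case/andP: L_low. Qed.

Lemma inX y : (y \in unionL L) = [exists pi in L, y \in pi].
Proof. by apply/bigcupP/existsP => [[pi piL yp]|[pi /andP[piL yp]]]; exists pi => //; rewrite piL. Qed.

Lemma inL_X pi : pi \in L -> pi \subset unionL L.
Proof. by move=> piL; apply/subsetP => y yp; rewrite inX; apply/existsP; exists pi; rewrite piL. Qed.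

Lemma x0X : x0 \in unionL L.
Proof.
move: LS; rewrite inE => /andP[_ /existsP[pi /andP[piL /existsP[x /andP[xp /eqP x_0]]]]].
by rewrite -(is_x0 x_0); exact: (subsetP (inL_X piL)).
Qed.

Lemma lowL s t : s \in P -> t \in L -> arrow0 P s t -> s \in L.
Proof.
move=> sP tL st; move: L_low => /andP[_ /forallP/(_ t)]; rewrite tL /=.
by move/forallP/(_ s); rewrite sP /= => /implyP; apply; apply: connect1.
Qed.

Lemma outL pi y : pi \in P -> pi \notin L -> y \in pi -> y \notin unionL L.
Proof.
move=> piP piL yp; rewrite inX; apply/negP => /existsP[p' /andP[p'L yp']].
by move: piL; rewrite (P_uniq piP (subsetP L_sub _ p'L) yp yp') p'L.
Qed.

Lemma outL_gap pi y : pi \in P -> pi \notin L -> y \in pi ->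
  pi \subset gap (unionL L) (stdpos (unionL L) y).
Proof.
move=> piP piL yp; apply: single_gap => //.
  by move=> z zp; apply: outL zp.
move=> a b x ap bp; rewrite inX => /existsP[p' /andP[p'L xp']] ax xb.
have : arrow0 P pi p'.
  rewrite /arrow0 piP (subsetP L_sub _ p'L) /=; apply/set0Pn; exists x.
  rewrite !inE xp' andbT; apply/existsP; exists a; rewrite ap /=.
  by apply/existsP; exists b; rewrite bp ltnW // ltnW.
by move/(lowL piP p'L); rewrite (negbTE piL).
Qed.

Definition fam := [set f : famT | [forall i, f i \in NCC P (gap (unionL L) i)]].

Definition Gf (f : famT) : {set {set 'I_n}} := unionL L |: \bigcup_i f i.

Lemma famP f i : f \in fam -> f i \in NCC P (gap (unionL L) i).
Proof. by rewrite inE => /forallP. Qed.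

Lemma fam_part f i : f \in fam -> part_ok (f i) (gap (unionL L) i).
Proof. by move/(famP i); rewrite inE => /and3P[/partP]. Qed.

Lemma fam_block f i t : f \in fam -> t \in f i ->
  t != set0 /\ t \subset gap (unionL L) i.
Proof. by move=> /(fam_part i)[h0 hs _ _] tf; split; [apply: h0 | apply: hs]. Qed.

Lemma X_notgap i : ~~ (unionL L \subset gap (unionL L) i).
Proof.
by apply/negP => /subsetP/(_ x0 x0X); rewrite gapE x0X.
Qed.

Lemma Gf_cases f t : t \in Gf f -> t = unionL L \/ exists i, t \in f i.
Proof.
by case/setU1P => [->|/bigcupP[i _ ti]]; [left | right; exists i].
Qed.

Lemma fam_recover f i : f \in fam -> f i = [set t in Gf f | t \subset gap (unionL L) i].
Proof.
move=> fF; apply/setP => t; rewrite inE; apply/idP/andP => [ti|[tG tg]].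
  split; last by case: (fam_block fF ti).
  by rewrite /Gf; apply/setU1P; right; apply/bigcupP; exists i.
case: (Gf_cases tG) => [et|[j tj]].
  by move: tg; rewrite et (negbTE (X_notgap i)).
have [ne tg'] := fam_block fF tj.
case/set0Pn: ne => y yt.
by rewrite (gap_inj (subsetP tg y yt) (subsetP tg' y yt)).
Qed.

Lemma Gf_inj : {in fam &, injective Gf}.
Proof.
move=> f1 f2 f1F f2F e; apply/ffunP => i.
by rewrite (fam_recover i f1F) (fam_recover i f2F) e.
Qed.

Lemma fam_disj f : f \in fam -> forall i j, i != j -> [disjoint f i & f j].
Proof.
move=> fF i j ne; rewrite -setI_eq0; apply/eqP/setP => t; rewrite !inE.
apply/negbTE/negP => /andP[ti tj].
have [nt tg] := fam_block fF ti; have [_ tg'] := fam_block fF tj.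
case/set0Pn: nt => y yt.
by move: ne; rewrite (gap_inj (subsetP tg y yt) (subsetP tg' y yt)) eqxx.
Qed.

Lemma X_notin f : f \in fam -> unionL L \notin \bigcup_i f i.
Proof.
move=> fF; apply/negP => /bigcupP[i _ Xi].
by have [_ /negP] := fam_block fF Xi; rewrite (negbTE (X_notgap i)).
Qed.

Lemma Gf_prod (R : comRingType) (g : {set 'I_n} -> R) f : f \in fam ->
  (\prod_(t in Gf f) g t = g (unionL L) * \prod_i \prod_(t in f i) g t)%R.
Proof.
move=> fF; rewrite /Gf big_setU1 ?X_notin //=; congr (_ * _)%R.
exact: partition_disjoint_bigcup (fam_disj fF).
Qed.

Lemma gap_mid (X : {set 'I_n}) (i j : nat) (a b c : 'I_n) : a \in gap X i -> b \in gap X i -> c \in gap X j ->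
  a < c -> c < b -> i = j.
Proof.
rewrite !gapE => /andP[_ /eqP ai] /andP[_ /eqP bi] /andP[_ /eqP cj] ac cb.
have h1 := stdpos_mono X (ltnW ac); have h2 := stdpos_mono X (ltnW cb).
apply/eqP; rewrite -ai -cj eqn_leq h1 /=; apply: leq_trans h2 _.
by rewrite bi ai.
Qed.

Lemma Gf_NCC f : f \in fam -> Gf f \in NCC P setT.
Proof.
move=> fF; rewrite inE; apply/and3P; split.
- apply/partP; split.
  + move=> t /Gf_cases[->|[i ti]]; last by case: (fam_block fF ti).
    by apply/set0Pn; exists x0; exact: x0X.
  + by move=> t _; apply: subsetT.
  + move=> y _; have [yX|yX] := boolP (y \in unionL L).
      by exists (unionL L) => //; apply: setU11.
    have yg : y \in gap (unionL L) (gi (unionL L) y) by rewrite giE in_gap.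
    have [_ _ hc _] := fam_part (gi (unionL L) y) fF.
    have [t ti yt] := hc y yg.
    by exists t => //; apply/setU1P; right; apply/bigcupP; exists (gi (unionL L) y).
  + move=> t1 t2 y /Gf_cases[->|[i t1i]] /Gf_cases[->|[j t2j]] y1 y2 //.
    * have [_ /subsetP tg] := fam_block fF t2j.
      by move: (gap_disjX (tg y y2)); rewrite y1.
    * have [_ /subsetP tg] := fam_block fF t1i.
      by move: (gap_disjX (tg y y1)); rewrite y2.
    * have [_ /subsetP tg1] := fam_block fF t1i; have [_ /subsetP tg2] := fam_block fF t2j.
      move: t2j; rewrite -(gap_inj (tg1 y y1) (tg2 y y2)) => t2i.
      by have [_ _ _ hu] := fam_part i fF; apply: (hu _ _ y).
- apply/ncP => pi rho /Gf_cases[->|[i pii]] /Gf_cases[->|[j rhoj]] ne a b c d ap bp cr dr ac cb bd.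
  + by rewrite eqxx in ne.
  + have [_ /subsetP tg] := fam_block fF rhoj.
    exact: (gap_noX (tg c cr) (tg d dr) bp cb bd).
  + have [_ /subsetP tg] := fam_block fF pii.
    exact: (gap_noX (tg a ap) (tg b bp) cr ac cb).
  + have [_ /subsetP tg1] := fam_block fF pii; have [_ /subsetP tg2] := fam_block fF rhoj.
    have eij : i = j.
      by apply: val_inj; apply: (gap_mid (tg1 a ap) (tg1 b bp) (tg2 c cr) ac cb).
    move: rhoj; rewrite -eij => rhoi.
    have := famP i fF; rewrite inE => /and3P[_ /ncP h _].
    exact: (h pi rho pii rhoi ne a b c d ap bp cr dr ac cb bd).
- apply/forallP => pi; apply/implyP => piP; apply/implyP => _; rewrite setIT.
  have [piL|piL] := boolP (pi \in L).
    by apply/existsP; exists (unionL L); rewrite setU11 inL_X.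
  have /set0Pn[y yp] := P_ne0 piP.
  have pg := outL_gap piP piL yp.
  rewrite -giE in pg.
  have := famP (gi (unionL L) y) fF; rewrite inE => /and3P[_ _ /forallP/(_ pi)].
  rewrite piP /= (setIidPl pg).
  have -> : pi != set0 by apply/set0Pn; exists y.
  case/existsP => t /andP[ti st]; apply/existsP; exists t; rewrite st andbT.
  by apply/setU1P; right; apply/bigcupP; exists (gi (unionL L) y).
Qed.

Lemma LQ_Gf f : f \in fam -> LQ (Gf f) = L.
Proof.
move=> fF; apply/setP => pi; rewrite inE; apply/andP/idP => [[piP]|piL].
  case/existsP => t /and3P[tG /existsP[x /andP[xt /eqP x_0]] pit].
  move: xt; rewrite (is_x0 x_0) => x0t.
  case: (Gf_cases tG) => [et|[i ti]]; last first.
    by have [_ /subsetP tg] := fam_block fF ti; move: (gap_disjX (tg x0 x0t)); rewrite x0X.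
  apply/negPn/negP => piL.
  have /set0Pn[y yp] := P_ne0 piP.
  by move: (outL piP piL yp); rewrite -et (subsetP pit y yp).
split; first exact: (subsetP L_sub).
apply/existsP; exists (unionL L); rewrite setU11 inL_X // andbT.
by apply/existsP; exists x0; rewrite x0X x00.
Qed.
Lemma NCC_Gf Q : Q \in NCC P setT -> LQ Q = L -> Q \in Gf @: fam.
Proof.
rewrite inE => /and3P[/partP[q0 _ qc qu] ncQ /forallP rQ] eL.
have refQ : forall pi, pi \in P -> exists2 t, t \in Q & pi \subset t.
  move=> pi piP; move: (rQ pi); rewrite piP setIT P_ne0 //= => /existsP[t /andP[]].
  by exists t.
have [t0 t0Q x0t0] := qc x0 (in_setT _).
have h0 : forall t, t \in Q -> [exists x in t, nat_of_ord x == 0%N] -> t = t0.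
  move=> t tQ /existsP[x /andP[xt /eqP x_0]]; move: xt; rewrite (is_x0 x_0) => x0t.
  exact: qu x0t x0t0.
have eX : unionL L = t0.
  apply/setP => y; apply/idP/idP => [|yt].
    rewrite inX => /existsP[pi /andP[piL yp]]; move: piL; rewrite -eL inE.
    case/andP => _ /existsP[t /and3P[tQ ht pit]].
    by rewrite -(h0 t tQ ht) (subsetP pit).
  have [pi piP yp] := P_cov y; have [t tQ pit] := refQ pi piP.
  have et : t = t0 by apply: (qu _ _ y) => //; exact: (subsetP pit).
  rewrite inX; apply/existsP; exists pi; rewrite yp andbT -eL inE piP /=.
  apply/existsP; exists t0; rewrite t0Q -et pit andbT.
  by apply/existsP; exists x0; rewrite -et in x0t0; rewrite x0t0 x00.
have XQ : unionL L \in Q by rewrite eX.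
have blk : forall t y, t \in Q -> t != unionL L -> y \in t ->
    t \subset gap (unionL L) (stdpos (unionL L) y).
  move=> t y tQ ne yt; apply: single_gap => //.
    move=> z zt; apply/negP => zX; move: ne; rewrite (qu _ _ z tQ XQ zt zX) eqxx //.
  move=> a b x at_ bt xX ax xb.
  have ne' : unionL L != t by rewrite eq_sym.
  apply: (cross0 ncQ XQ tQ ne' x0X x00 xX at_ bt ax xb).
  apply/negP => x0t; move: ne; rewrite (qu _ _ x0 tQ XQ x0t x0X) eqxx //.
pose f : famT := [ffun i : 'I_n.+1 => [set t in Q | t \subset gap (unionL L) i]].
have fF : f \in fam.
  rewrite inE; apply/forallP => i; rewrite inE ffunE; apply/and3P; split.
  - apply/partP; split.
    + by move=> t; rewrite inE => /andP[tQ _]; apply: q0.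
    + by move=> t; rewrite inE => /andP[].
    + move=> y yg; have [t tQ yt] := qc y (in_setT _).
      exists t => //; rewrite inE tQ /=.
      have ne : t != unionL L.
        by apply/negP => /eqP et; move: (gap_disjX yg); rewrite -et yt.
      by have := blk t y tQ ne yt; move: yg; rewrite gapE => /andP[_ /eqP ->].
    + by move=> t1 t2 y; rewrite !inE => /andP[t1Q _] /andP[t2Q _]; apply: qu.
  - by apply: nc_sub ncQ; apply/subsetP => t; rewrite inE => /andP[].
  - apply/forallP => pi; apply/implyP => piP; apply/implyP => /set0Pn[y].
    rewrite inE => /andP[yp yg]; have [t tQ pit] := refQ pi piP.
    apply/existsP; exists t.
    have yt := subsetP pit y yp.
    have ne : t != unionL L.
      by apply/negP => /eqP et; move: (gap_disjX yg); rewrite -et yt.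
    have tg := blk t y tQ ne yt; move: yg tg; rewrite gapE => /andP[_ /eqP ->] tg.
    by rewrite inE tQ tg /=; apply: subset_trans pit; apply: subsetIl.
apply/imsetP; exists f => //; apply/setP => t; apply/idP/idP => [tQ|tG]; last first.
  case: (Gf_cases tG) => [->//|[i]]; by rewrite ffunE inE => /andP[].
have [->|ne] := eqVneq t (unionL L); first exact: setU11.
have /set0Pn[y yt] := q0 t tQ.
apply/setU1P; right; apply/bigcupP; exists (gi (unionL L) y) => //.
by rewrite ffunE inE tQ giE blk.
Qed.

End FixL.

Lemma LQ_LSn Q : Q \in NCC P setT -> LQ Q \in LSn.
Proof.
move=> QN; move: (QN); rewrite inE => /and3P[/partP[q0 _ qc qu] ncQ /forallP rQ].
have refQ : forall pi, pi \in P -> exists2 t, t \in Q & pi \subset t.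
  move=> pi piP; move: (rQ pi); rewrite piP setIT P_ne0 //= => /existsP[t /andP[]].
  by exists t.
have [t0 t0Q x0t0] := qc x0 (in_setT _).
have h0 : forall t, t \in Q -> [exists x in t, nat_of_ord x == 0%N] -> t = t0.
  move=> t tQ /existsP[x /andP[xt /eqP x_0]]; move: xt; rewrite (is_x0 x_0) => x0t.
  exact: qu x0t x0t0.
have has0t0 : [exists x in t0, nat_of_ord x == 0%N].
  by apply/existsP; exists x0; rewrite x0t0 x00.
have inLQ : forall pi, (pi \in LQ Q) = (pi \in P) && (pi \subset t0).
  move=> pi; rewrite inE; congr (_ && _); apply/existsP/idP => [[t /and3P[tQ ht pit]]|pit].
    by rewrite -(h0 t tQ ht).
  by exists t0; rewrite t0Q has0t0 pit.
rewrite inE; apply/andP; split.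
  apply: lowerset_closed.
    by apply/subsetP => pi; rewrite inLQ => /andP[].
  move=> s t; rewrite inLQ => /andP[tP tt0] /and3P[sP _ /set0Pn[c]].
  rewrite inE => /andP[cs ct].
  have ct0 := subsetP tt0 c ct.
  have [u uQ su] := refQ s sP.
  rewrite inLQ sP /=.
  have [eu|neu] := eqVneq u t0; first by rewrite -eu.
  exfalso; have ne' : t0 != u by rewrite eq_sym.
  apply: (conv0 ncQ t0Q uQ ne' x0t0 x00 ct0 (subsetP (Conv_mono su) c cs)).
    by apply/negP => cu; move: neu; rewrite (qu _ _ c uQ t0Q cu ct0) eqxx.
  by apply/negP => x0u; move: neu; rewrite (qu _ _ x0 uQ t0Q x0u x0t0) eqxx.
have [pi piP x0p] := P_cov x0; have [u uQ pu] := refQ pi piP.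
have eu : u = t0 by apply: (qu _ _ x0) => //; exact: (subsetP pu).
apply/existsP; exists pi; rewrite inLQ piP -eu pu /=.
by apply/existsP; exists x0; rewrite x0p x00.
Qed.

Lemma main_id (R : comNzRingType) (g : {set 'I_n} -> R) :
  (\sum_(Q in NCC P setT) \prod_(t in Q) g t =
   \sum_(L in LSn) g (unionL L) *
      \prod_(i : 'I_n.+1) \sum_(Q in NCC P (gap (unionL L) i)) \prod_(t in Q) g t)%R.
Proof.
rewrite (partition_big LQ (mem LSn)) /=; last by move=> Q QN; exact: LQ_LSn.
apply: eq_bigr => L LS.
rewrite bigA_distr_big_dep.
rewrite mulr_sumr.
rewrite (eq_bigl (fun f => f \in fam L)); last first.
  by move=> f; rewrite [RHS]inE; apply/familyP/forallP.
rewrite (eq_bigr (fun f => \prod_(t in Gf L f) g t)%R); last first.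
  by move=> f fF; rewrite Gf_prod.
rewrite -(big_imset (fun Q : {set {set 'I_n}} => \prod_(t in Q) g t)%R (@Gf_inj L LS)) /=.
apply: eq_bigl => Q; apply/andP/idP => [[QN /eqP eQ]|/imsetP[f fF ->]].
  exact: NCC_Gf.
by rewrite Gf_NCC // LQ_Gf.
Qed.

End Main.
Section Final.
Variable R : fieldType.
Variable kappa : seq NCP -> R.
Local Open Scope ring_scope.

Lemma prod_iota_ord n (X : {set 'I_n}) (F : nat -> R) :
  (forall i, (#|X| < i)%N -> F i = 1) ->
  \prod_(i <- iota 0 #|X|.+1) F i = \prod_(i < n.+1) F i.
Proof.
move=> F1; rewrite -(big_mkord xpredT F).
have -> : iota 0 #|X|.+1 = index_iota 0 #|X|.+1 by rewrite /index_iota subn0.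
rewrite (big_cat_nat _ (m := 0) (n := #|X|.+1) (p := n.+1)) //=; last first.
  by rewrite ltnS card_le_n.
rewrite [X in _ = _ * X]big_nat_cond [X in _ = _ * X]big1 ?mulr1 //.
by move=> i /andP[/andP[h _] _]; apply: F1.
Qed.

Lemma Zp_cuts (p : NCP) :
  Zp kappa p = \sum_(c <- cuts1 p) kappa c.1 * \prod_(q <- c.2) Zp kappa q.
Proof.
have [n0 nP] := ncpP p; have pP := ncp_part p; have ncP' := (andP nP).2.
pose x0 : 'I_(ncp_n p) := Ordinal n0.
rewrite Zp_eq /Zs (@main_id _ _ x0 pP erefl _ (kr kappa (ncp_P p))).
rewrite cuts1E big_map big_enum /=.
apply: eq_big => [L|L LS]; first by rewrite !inE.
congr (_ * _).
  rewrite /cut_L /kr.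
  by rewrite (toNCP_restr_some nP (unionL_pos pP (LS1_sub LS) (LS1_ne LS))) /= !big_cons !big_nil mulr1.
rewrite /cut_Ubar big_pmap -(prod_iota_ord (X := unionL L) (F := fun i => Zs kappa (ncp_P p) (gap (unionL L) i))).
  apply: eq_bigr => i _; rewrite -(Zopt_restr kappa _ nP) /Zopt.
  by case: (toNCP _) => [q|] /=; rewrite ?big_cons ?big_nil ?mulr1.
by move=> i lt; rewrite gap_big // Zs_set0.
Qed.

Lemma F_fix (psi : seq NCP -> R) : (forall w, psi w = 1) -> is_infchar kappa ->
  forall w, coact psi (charB kappa) w =
            eps R w + halfprec kappa (coact psi (charB kappa)) w.
Proof.
move=> h1 [k0 kc]; have cp := coact_prod kappa h1.
case => [|p w]; first by rewrite cp big_nil /= addr0.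
rewrite /= add0r cp big_cons Zp_cuts big_distrl /=.
rewrite big_seq [RHS]big_seq; apply: eq_bigr => c cin.
have [c1 _] := cuts1_props cin.
rewrite (@sum_allcuts_single _ w (fun d => kappa (c.1 ++ d.1) * coact psi (charB kappa) (c.2 ++ d.2))).
  by rewrite cats0 cp big_cat /= mulrA.
move=> d /= ne; rewrite kc ?mul0r //; first by case: (c.1) c1.
by case: (d.1) ne.
Qed.

End Final.

Local Open Scope ring_scope.

Theorem mainTheorem12 (R : fieldType) (psi kappa phi : seq NCP -> R) :
  (forall w, psi w = eps R w + halfprec (@einf R) psi w) ->
  is_infchar kappa ->
  is_char phi ->
  ((forall w, phi w = eps R w + halfprec kappa phi w) <->
   (forall w, phi w = coact psi (charB kappa) w)).
Proof.
move=> hpsi kinf _.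
have h1 := psi_one hpsi.
have Ffix := F_fix h1 kinf.
split => [hphi|hphi].
  exact: fix_unique hphi Ffix.
move=> w; rewrite hphi Ffix; congr (_ + _)%R.
by apply: halfprec_ext => u _; rewrite hphi.
Qed.
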